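(* Let $\mathcal{M}=(E,r)$ be a matroid with rank function $r$ and girth at least $d+1$. Let $i$ be an integer with $d\leq i\leq |E|$, and let $A$ be a uniformly random subset of $E$ of size $i$. Then $$\mathbb{E}(r(A))\geq d+(r(E)-d)\frac{i-d}{|E|-d}.$$
   Context: The girth of a matroid is the size of its smallest circuit ($+\infty$ if it has no circuits). *)

(* Defs.v *)
From mathcomp Require Import all_boot all_order all_algebra.
Set Implicit Arguments. Unset Strict Implicit. Unset Printing Implicit Defensive.
Import Order.TTheory GRing.Theory Num.Theory.

(* A matroid on the finite ground set E = [set: T], given by its rank function
   (axioms R1-R3). *)
Definition is_matroid_rank (T : finType) (r : {set T} -> nat) : Prop :=
  [/\ forall X : {set T}, r X <= #|X|,
      forall X Y : {set T}, X \subset Y -> r X <= r Y &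
      forall X Y : {set T}, r (X :|: Y) + r (X :&: Y) <= r X + r Y].

Definition dependent (T : finType) (r : {set T} -> nat) (X : {set T}) : bool :=
  r X < #|X|.

Definition circuit (T : finType) (r : {set T} -> nat) (C : {set T}) : Prop :=
  dependent r C /\ forall D : {set T}, D \proper C -> ~~ dependent r D.

(* girth >= k : every circuit has at least k elements (girth = +oo if no circuit) *)
Definition girth_ge (T : finType) (r : {set T} -> nat) (k : nat) : Prop :=
  forall C : {set T}, circuit r C -> k <= #|C|.

Definition expected_rank (T : finType) (r : {set T} -> nat) (i : nat) : rat :=
  (\sum_(A : {set T} | #|A| == i) (r A)%:R) / ('C(#|T|, i))%:R.

(* Main.v *)
Require Import Defs.
From mathcomp Require Import all_boot all_order all_algebra.
From mathcomp Require Import zify ring lra.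
Import Order.TTheory GRing.Theory Num.Theory.

Section Mat.
Variables (T : finType) (r : {set T} -> nat) (d : nat).
Hypothesis hr : is_matroid_rank r.
Hypothesis hg : girth_ge r d.+1.

Lemma r_card (X : {set T}) : r X <= #|X|. Proof. by case: hr. Qed.
Lemma r_mono (X Y : {set T}) : X \subset Y -> r X <= r Y. Proof. by case: hr => _ H _; apply: H. Qed.
Lemma r_sub (X Y : {set T}) : r (X :|: Y) + r (X :&: Y) <= r X + r Y. Proof. by case: hr. Qed.

Lemma indep_small n : forall X : {set T}, #|X| < n -> #|X| <= d -> r X = #|X|.
Proof.
elim: n => // n IH X ltX leX.
apply/eqP; rewrite eqn_leq r_card /= leqNgt; apply/negP => dep.
have circ : circuit r X.
  split => // D DX; rewrite /dependent -leqNgt.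
  have cD := proper_card DX.
  rewrite IH //; lia.
have := hg _ circ; lia.
Qed.

Lemma indep (X : {set T}) : #|X| <= d -> r X = #|X|.
Proof. exact: (@indep_small #|X|.+1). Qed.

Lemma rank_ge n : forall X : {set T}, #|X| = n -> d <= n -> d <= r X.
Proof.
elim: n => [|n IH] X cX led; first lia.
case: (ltnP n d) => hnd.
  have -> : d = n.+1 by lia.
  by rewrite -cX indep //; lia.
have : X != set0 by rewrite -card_gt0 cX.
case/set0Pn => e eX.
have := IH (X :\ e). rewrite (cardsD1 e X) eX in cX.
move=> /(_ ltac:(lia) hnd) h.
apply: (leq_trans h); apply: r_mono; exact: subD1set.
Qed.

Lemma r_unit (X : {set T}) e : r X <= r (X :\ e) + 1.
Proof.
have h := r_sub (X :\ e) [set e].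
have h1 : r [set e] <= 1 by rewrite -(cards1 e) r_card.
have h2 : r X <= r (X :\ e :|: [set e]).
  apply: r_mono; apply/subsetP => x xX; rewrite !inE xX; by case: (x == e).
lia.
Qed.

Definition coloops (C : {set T}) := [set e in C | r (C :\ e) < r C].

Lemma coloop_bound (C : {set T}) n : forall K : {set T}, #|K| = n -> K \subset coloops C ->
  r (C :\: K) + n <= r C.
Proof.
elim: n => [|n IH] K cK sK.
  move/eqP: cK; rewrite cards_eq0 => /eqP ->; rewrite setD0; lia.
have : K != set0 by rewrite -card_gt0 cK.
case/set0Pn => e eK.
have cK' : #|K :\ e| = n by move: cK; rewrite (cardsD1 e K) eK; lia.
have sK' : K :\ e \subset coloops C by apply: subset_trans sK; exact: subD1set.
have ih := IH _ cK' sK'.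
have ec : e \in coloops C by apply: (subsetP sK).
move: ec; rewrite inE => /andP [eC lt].
have h := r_sub (C :\: (K :\ e)) (C :\ e).
have E1 : C :\: (K :\ e) :|: C :\ e = C.
  apply/setP => x; rewrite !inE; case: (x == e); case: (x \in C); by rewrite ?andbF ?andbT ?orbT ?orbF.
have E2 : (C :\: (K :\ e)) :&: (C :\ e) = C :\: K.
  apply/setP => x; rewrite !inE; case: (eqVneq x e) => [->|] /=; first by rewrite eK /=; case: (e \in C).
  by case: (x \in C); case: (x \in K).
rewrite E1 E2 in h. lia.
Qed.

Definition SC (C : {set T}) := \sum_(e in C) r (C :\ e).

Lemma SC_eq (C : {set T}) : SC C + #|coloops C| = #|C| * r C.
Proof.
rewrite -sum_nat_const /SC.
have -> : #|coloops C| = \sum_(e in C) (e \in coloops C : nat).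
  rewrite -big_mkcondr /= -sum1_card; apply: eq_bigl => x.
  rewrite !inE; by case: (x \in C).
rewrite -big_split /=; apply: eq_bigr => e eC.
rewrite inE eC /=.
have h1 := r_unit C e.
have h2 : r (C :\ e) <= r C by apply: r_mono; exact: subD1set.
case: ltnP => /= h; lia.
Qed.

Lemma perC (C : {set T}) m : #|C| = m -> d < m ->
  m * d * (m - d) + r C * m * (m - 1 - d) <= (m - d) * SC C + d * m * (m - 1 - d).
Proof.
move=> cC ldm.
have hS := SC_eq C.
set c := #|coloops C| in hS.
have hc : (m - d) * c <= m * (r C - d).
  have hb := @coloop_bound C c _ (erefl c) (subxx (coloops C)).
  have sKC : coloops C \subset C by apply/subsetP => x; rewrite inE => /andP[].
  have cD : #|C :\: coloops C| = m - c by rewrite cardsDS // cC.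
  case: (leqP d (m - c)) => h.
    have := @rank_ge _ _ cD h => h2.
    apply: leq_mul; [exact: leq_subr | lia].
  have := @indep (C :\: coloops C) ltac:(rewrite cD; lia); rewrite cD => hi.
  have cm : c <= m by rewrite -cC /c subset_leq_card.
  have mr : m <= r C by lia.
  apply: (@leq_trans ((m - d) * m)); first exact: leq_mul.
  rewrite mulnC; apply: leq_mul => //; lia.
have hd : d <= r C by apply: (@rank_ge _ _ cC); lia.
rewrite cC in hS.
move: hc hS; set S := SC C; set R := r C.
have [a ->] : exists a, m = d + a + 1 by exists (m - d - 1); lia.
have [b ->] : exists b, R = d + b by exists (R - d); lia.
have -> : d + a + 1 - d = a + 1 by lia.
have -> : d + a + 1 - 1 - d = a by lia.
have -> : d + b - d = b by lia.
move=> hc hS.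
have hS2 := congr1 (muln (a + 1)) hS.
rewrite /= in hS2.
lia.
Qed.


Definition g i := \sum_(A : {set T} | #|A| == i) r A.

Lemma dc i : \sum_(C : {set T} | #|C| == i.+1) SC C = (#|T| - i) * g i.
Proof.
rewrite /SC /g.
rewrite (exchange_big_dep predT) //=.
transitivity (\sum_(e : T) \sum_(A : {set T} | (#|A| == i) && (e \notin A)) r A).
  apply: eq_bigr => e _.
  rewrite (reindex_onto (fun A => e |: A) (fun C => C :\ e)); last first.
    by move=> C /andP [_ eC]; rewrite setD1K.
  apply: eq_big => [A|A].
    have -> : (e |: A) :\ e = A :\ e by apply/setP => x; rewrite !inE; case: (x == e).
    rewrite cardsU1 setU11 andbT.
    case eA: (e \in A) => /=.
      rewrite andbF; apply: negbTE; apply/andP => -[_ /eqP h]; move: eA; rewrite -h !inE eqxx; by [].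
    have -> : A :\ e = A by apply/setP => x; rewrite !inE; case: eqP => // ->; rewrite eA.
    by rewrite eqxx !andbT add1n eqSS.
  move=> /andP [/andP [_ _] /eqP h]; congr (r _).
  by apply/setP => x; move/setP: h => /(_ x); rewrite !inE; case: (x == e).
rewrite (exchange_big_dep (fun A : {set T} => #|A| == i)) /=; last by move=> ? ? _ /andP[].
rewrite big_distrr /=; apply: eq_bigr => A /eqP cA.
rewrite (eq_bigl (fun e => e \in ~: A)); last by move=> e; rewrite inE cA eqxx.
rewrite sum_nat_const; congr (_ * _).
by rewrite -(cardsC A) cA addKn.
Qed.


Lemma sumconst k m : \sum_(C : {set T} | #|C| == m) k = 'C(#|T|, m) * k.
Proof. by rewrite -card_draws -sum1dep_card big_distrl /=; apply: eq_bigr => *; rewrite mul1n. Qed.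

Lemma step i : d <= i -> i < #|T| ->
  'C(#|T|, i.+1) * (i.+1 * d * (i.+1 - d)) + i.+1 * (i - d) * g i.+1
  <= (i.+1 - d) * ((#|T| - i) * g i) + 'C(#|T|, i.+1) * (d * i.+1 * (i - d)).
Proof.
move=> di iT.
have H : \sum_(C : {set T} | #|C| == i.+1) (i.+1 * d * (i.+1 - d) + r C * i.+1 * (i.+1 - 1 - d))
  <= \sum_(C : {set T} | #|C| == i.+1) ((i.+1 - d) * SC C + d * i.+1 * (i.+1 - 1 - d)).
  apply: leq_sum => C /eqP cC; apply: perC => //.
move: H; have -> : i.+1 - 1 - d = i - d by lia.
rewrite -dc !big_split /= !sumconst -!big_distrr /=.
rewrite -!big_distrl /= -/(g i.+1).
have -> : g i.+1 * i.+1 * (i - d) = i.+1 * (i - d) * g i.+1 by rewrite -mulnA mulnC.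
by [].
Qed.
End Mat.
Local Open Scope ring_scope.

Lemma main_ind (T : finType) (r : {set T} -> nat) (d : nat) :
  is_matroid_rank r -> girth_ge r d.+1 -> forall k i, (d <= i)%N -> (i <= #|T|)%N ->
  (#|T| - i)%N = k ->
  (d%:R + ((r [set: T])%:R - d%:R) * ((i%:R - d%:R) / (#|T|%:R - d%:R)) : rat)
    <= (g T r i)%:R / ('C(#|T|, i))%:R.
Proof.
move=> hr hg; set n := #|T|; set R := r [set: T].
set X : rat := (R%:R - d%:R) / (n%:R - d%:R).
have eX i : ((R%:R - d%:R) * ((i%:R - d%:R) / (n%:R - d%:R)) : rat) = X * (i%:R - d%:R).
  by rewrite /X mulrA [_ / _ * _]mulrAC.
elim=> [|k IH] i di iT ek.
  have -> : i = n by rewrite /n; lia.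
  have -> : g T r n = R.
    rewrite /g (big_pred1 [set: T]) // => A /=.
    by rewrite eqEcard subsetT cardsT /n /= eqn_leq max_card.
  have -> : 'C(n, n) = 1%N by exact: binn.
  rewrite divr1.
  case: (eqVneq n d) => [nd|nd].
    rewrite nd subrr mul0r mulr0 addr0 ler_nat.
    have := @indep T r d hr hg [set: T]; rewrite cardsT -/n nd leqnn -/R => /(_ isT) ->.
    by [].
  rewrite divff; first by rewrite mulr1 addrC subrK.
  by rewrite subr_eq0 eqr_nat.
have ltin : (i < n)%N by rewrite /n; lia.
have := IH i.+1 ltac:(lia) ltin ltac:(rewrite /n; lia).
rewrite eX !eX.
have hs := @step T r d hr hg i di ltin.
have NM := mul_bin_left n i.
set N := 'C(n, i.+1) in hs NM *; set M := 'C(n, i) in NM *.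
set gm := g T r i.+1 in hs *; set gi := g T r i in hs *.
have Np : (0 : rat) < N%:R by rewrite ltr0n bin_gt0.
have Mp : (0 : rat) < M%:R by rewrite ltr0n bin_gt0; lia.
rewrite ler_pdivlMr // => h1.
rewrite ler_pdivlMr //.
have ea : ((i.+1)%:R - d%:R : rat) = (i.+1 - d)%N%:R by rewrite natrB //; lia.
have eb : ((i)%:R - d%:R : rat) = (i - d)%N%:R by rewrite natrB //.
rewrite ea in h1; rewrite eb.
move: hs; rewrite -(ler_nat rat) !natrD !natrM => hs.
set a : rat := (i.+1 - d)%N%:R in h1 hs *.
set b : rat := (i - d)%N%:R in hs *.
set kk : rat := (n - i)%N%:R in hs *.
have NMr : (i.+1)%:R * N%:R = kk * M%:R :> rat by rewrite -!natrM NM.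
have ap : 0 < a by rewrite ltr0n; lia.
have kp : 0 < kk by rewrite ltr0n; lia.
have b0 : 0 <= b by rewrite ler0n.
have m0 : (0:rat) <= (i.+1)%:R by rewrite ler0n.
have h2 := ler_wpM2l (mulr_ge0 m0 b0) h1.
rewrite -(ler_pM2l (mulr_gt0 ap kp)).
have E : a * kk * ((d%:R + X * b) * M%:R) =
   N%:R * ((i.+1)%:R * d%:R * a) + (i.+1)%:R * b * ((d%:R + X * a) * N%:R)
   - N%:R * (d%:R * (i.+1)%:R * b).
  have -> : a * kk * ((d%:R + X * b) * M%:R) = a * (kk * M%:R) * (d%:R + X * b) by ring.
  rewrite -NMr.
  have -> : a = b + 1.
    rewrite /a /b; have -> : (i.+1 - d = (i - d) + 1)%N by lia.
    by rewrite natrD.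
  ring.
rewrite E.
have -> : a * kk * gi%:R = a * (kk * gi%:R) by ring.
lra.
Qed.

Theorem lemma3p7 (T : finType) (r : {set T} -> nat) (d i : nat) :
  is_matroid_rank r -> girth_ge r d.+1 -> (d <= i)%N -> (i <= #|T|)%N ->
  (d%:R + ((r [set: T])%:R - d%:R) * ((i%:R - d%:R) / (#|T|%:R - d%:R)) : rat)
    <= expected_rank r i.
Proof.
move=> hr hg di iT.
rewrite /expected_rank -natr_sum.
exact: (@main_ind T r d hr hg _ i di iT erefl).
Qed.
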